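(* Let $n\ge1$, $l\in\{1,\dots,n\}$, and let $G$ and $N$ be random variables with joint distribution given by $$P(G=i,\ N-1-G=j)=\frac{1}{n}\,\frac{\binom{i+j}{i}\binom{n-1-i-j}{l-1-i}}{\binom{n-1}{l-1}}$$ for nonnegative integers $i,j$. Then $$\mathrm{var}\big(H(G)+H(N-1-G)\big)\le 28 .$$
   Context: $H(k)=H_k:=\sum_{i=1}^k 1/i$ for $k\in\mathbb{N}$ are the harmonic numbers, with $H(0)=H_0=0$. Binomial coefficients $\binom{a}{b}$ are $0$ if $b<0$ or $b>a$. *)

(* Defs.v *)
From mathcomp Require Import all_boot all_order all_algebra.
Set Implicit Arguments. Unset Strict Implicit. Unset Printing Implicit Defensive.
Import Order.TTheory GRing.Theory Num.Theory.
Local Open Scope ring_scope.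

Definition harmonic (R : fieldType) (k : nat) : R :=
  \sum_(1 <= i < k.+1) (i%:R)^-1.

(* P(G = i, N-1-G = j) = (1/n) C(i+j,i) C(n-1-i-j, l-1-i) / C(n-1,l-1),
   which is 0 unless i <= l-1 and i+j <= n-1 (binomials vanish otherwise). *)
Definition pmf (R : fieldType) (n l i j : nat) : R :=
  if (i < l)%N && (i + j < n)%N then
    (n%:R)^-1 * ('C(i + j, i)%:R * 'C(n.-1 - i - j, l.-1 - i)%:R)
      / 'C(n.-1, l.-1)%:R
  else 0.

(* The random variable X = H(G) + H(N-1-G) evaluated at (G, N-1-G) = (i, j). *)
Definition Xval (R : fieldType) (i j : nat) : R := harmonic R i + harmonic R j.

(* Expectation of X (support contained in {0..n-1}^2). *)
Definition meanX (R : fieldType) (n l : nat) : R :=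
  \sum_(i < n) \sum_(j < n) pmf R n l i j * Xval R i j.

Definition varX (R : fieldType) (n l : nat) : R :=
  \sum_(i < n) \sum_(j < n) pmf R n l i j * (Xval R i j - meanX R n l) ^+ 2.

(* Main.v *)
Require Import Defs.
From mathcomp Require Import all_boot all_order all_algebra.
From mathcomp Require Import zify ring lra.
Import Order.TTheory GRing.Theory Num.Theory.
Lemma binconv N p q : (\sum_(k < N.+1) 'C(k,p) * 'C(N-k,q) = 'C(N.+1, p+q+1))%N.
Proof.
elim: N p q => [|N IH] p q.
  rewrite big_ord1 /= !bin0n; case: p => [|p]; case: q => [|q] //=; by rewrite bin_small // addn1.
rewrite big_ord_recl /=. case: p => [|p].
  transitivity ('C(N.+1,q) + \sum_(k<N.+1) 'C(k,0)*'C(N-k,q)).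
    by rewrite bin0 mul1n subn0; congr (_ + _); apply eq_bigr => i _; rewrite !bin0 subSS.
  by rewrite IH !add0n addn1 binS addnC.
rewrite bin0n /= mul0n add0n.
transitivity (\sum_(k<N.+1) 'C(k,p.+1)*'C(N-k,q) + \sum_(k<N.+1) 'C(k,p)*'C(N-k,q)).
  by rewrite -big_split; apply eq_bigr => i _; rewrite /bump /= add1n binS subSS mulnDl.
by rewrite !IH [in RHS]addSn [in RHS]addSn binS.
Qed.
Lemma marg_nat M m i : (i <= m)%N -> (m <= M)%N ->
  (\sum_(j < M.+1) (if i + j < M.+1 then 'C(i+j,i) * 'C(M-i-j, m-i) else 0))%N = 'C(M.+1, m.+1).
Proof.
move=> im mM.
have -> : m.+1 = i + (m - i) + 1 by lia.
rewrite -binconv -(big_mkord xpredT (fun k => 'C(k,i) * 'C(M-k,m-i))) -(big_mkord xpredT (fun j => if i + j < M.+1 then 'C(i+j,i) * 'C(M-i-j, m-i) else 0)) [RHS](big_cat_nat _ (n := i)) /=; [|lia|lia].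
rewrite [X in _ = X + _]big1_seq ?add0n; last first.
  move=> k; rewrite mem_index_iota => /andP[_ ki]; by rewrite bin_small.
rewrite [RHS](_ : _ = \sum_(0 <= k < M.+1 - i) 'C(k+i, i) * 'C(M-(k+i), m-i)); last by rewrite -(@big_addn _ _ _ 0 M.+1 i xpredT (fun k => 'C(k,i) * 'C(M-k, m-i))) add0n.
rewrite [LHS](big_cat_nat _ (n := M.+1 - i)) //=; last by lia.
rewrite [X in _ + X = _]big1_seq ?addn0; last first.
  move=> k /andP[_]; rewrite mem_index_iota => /andP[ki _]. have -> : (i + k < M.+1) = false by lia. by [].
apply: eq_big_seq => k; rewrite mem_index_iota => /andP[_ ki].
have -> : (i + k < M.+1) = true by lia.
by rewrite [k + i]addnC subnDA.
Qed.
Local Open Scope ring_scope.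
Section S.
Variable R : realFieldType.
Lemma harmS L : harmonic R L.+1 = harmonic R L + (L.+1%:R)^-1.
Proof. by rewrite /harmonic big_nat_recr. Qed.

Lemma E1 L : \sum_(i<L) (harmonic R L - harmonic R i) = L%:R.
Proof.
elim: L => [|L IH]; first by rewrite big_ord0.
rewrite big_ord_recr /= harmS.
set t := (L.+1%:R)^-1.
have -> : \sum_(i<L) (harmonic R L + t - harmonic R i) = \sum_(i<L) (harmonic R L - harmonic R i) + \sum_(i<L) t.
  by rewrite -big_split; apply eq_bigr => i _; rewrite addrAC.
rewrite IH sumr_const card_ord [harmonic R L + t]addrC addrK.
have h : (L.+1%:R : R) != 0 by rewrite pnatr_eq0.
by rewrite -addrA -mulrSr -[t *+ _]mulr_natl /t mulfV // natr1.
Qed.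

Lemma D2 L : \sum_(i<L) (harmonic R L - harmonic R i)^+2 <= 2 * L%:R.
Proof.
elim: L => [|L IH]; first by rewrite big_ord0 mulr0.
rewrite big_ord_recr /= harmS.
set t := (L.+1%:R)^-1.
have -> : \sum_(i<L) (harmonic R L + t - harmonic R i)^+2 = \sum_(i<L) (harmonic R L - harmonic R i)^+2 + 2 * t * \sum_(i<L) (harmonic R L - harmonic R i) + \sum_(i<L) t^+2.
  rewrite mulr_sumr -!big_split; apply eq_bigr => i _ /=. ring.
rewrite E1 sumr_const card_ord [harmonic R L + t]addrC addrK.
have h : (L.+1%:R : R) != 0 by rewrite pnatr_eq0.
have t0 : 0 <= t by rewrite /t invr_ge0 ler0n.
have key : 2 * t * L%:R + t^+2 *+ L.+1 = 2 - t.
  have e : L.+1%:R * t = 1 by rewrite mulfV.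
  have e2 : t ^+ 2 *+ L.+1 = t by rewrite -mulr_natl expr2 mulrA e mul1r.
  rewrite e2. rewrite -natr1 mulrDl mul1r in e. nra.
by rewrite -addrA -mulrSr -addrA key -natr1; lra.
Qed.
Lemma margI n l i : (1 <= l <= n)%N ->
  \sum_(j < n) pmf R n l i j = if (i < l)%N then (l%:R)^-1 else 0.
Proof.
case: n => [|M]; first by case: l => [|l] /andP[].
case: l => [|m] // /andP[_ mM]. rewrite ltnS in mM.
case: (ltnP i m.+1) => il; last first.
  by apply: big1 => j _; rewrite /pmf ltnNge il.
have hC : ('C(M, m)%:R : R) != 0 by rewrite pnatr_eq0 -lt0n bin_gt0.
set c := (M.+1%:R : R)^-1 / 'C(M, m)%:R.
have -> : \sum_(j < M.+1) pmf R M.+1 m.+1 i j =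
   \sum_(j < M.+1) c * ((if i + j < M.+1 then 'C(i+j,i) * 'C(M-i-j, m-i) else 0)%N)%:R.
  apply: eq_bigr => j _; rewrite /pmf il /=; case: ifP => _; last by rewrite mulr0.
  by rewrite natrM /c mulrAC.
rewrite -mulr_sumr -natr_sum marg_nat //.
have e : (M.+1%:R * 'C(M,m)%:R : R) = m.+1%:R * 'C(M.+1,m.+1)%:R by rewrite -!natrM mul_bin_diag.
have hm : (m.+1%:R : R) != 0 by rewrite pnatr_eq0.
have hM : (M.+1%:R : R) != 0 by rewrite pnatr_eq0.
have e' : ('C(M.+1,m.+1)%:R : R) = M.+1%:R * 'C(M,m)%:R / m.+1%:R.
  by rewrite e mulrAC mulfV // mul1r.
rewrite e' /c. field. by rewrite hC !(addrC 1) !natr1 !pnatr_eq0.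
Qed.

Lemma pmf_sym n l i j : (1 <= l <= n)%N -> pmf R n l i j = pmf R n (n - l).+1 j i.
Proof.
case: n => [|M]; first by case: l => [|l] /andP[].
case: l => [|m] // /andP[_ mM]. rewrite ltnS in mM.
rewrite /pmf /= !subSS bin_sub // [(j + i)%N]addnC.
have [hij|hij] := boolP (i + j < M.+1)%N; rewrite ?andbT ?andbF //.
have [im|im] := boolP (i < m.+1)%N; have [jm|jm] := boolP (j < (M - m).+1)%N => //=.
- have -> : 'C(i + j, j) = 'C(i + j, i) by rewrite -bin_sub ?leq_addl // addnK.
  have -> : (M - j - i = M - i - j)%N by lia.
  have -> : (M - m - j = (M - i - j) - (m - i))%N by lia.
  by rewrite bin_sub //; lia.
- by rewrite (bin_small (n := (M - i - j)%N)) ?mulr0 ?mul0r //; lia.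
- by rewrite (bin_small (n := (M - j - i)%N)) ?mulr0 ?mul0r //; lia.
Qed.

Lemma margJ n l j : (1 <= l <= n)%N ->
  \sum_(i < n) pmf R n l i j = if (j < (n - l).+1)%N then (((n - l).+1)%:R)^-1 else 0.
Proof.
move=> hl. rewrite -(@margI n (n - l).+1 j); last by lia.
by apply: eq_bigr => i _; rewrite pmf_sym.
Qed.

Lemma pmf_ge0 n l i j : 0 <= pmf R n l i j.
Proof.
rewrite /pmf; case: ifP => _ //.
by rewrite !mulr_ge0 ?invr_ge0 ?ler0n.
Qed.

Lemma var_le (T : finType) (p X : T -> R) c : \sum_x p x = 1 ->
  \sum_x p x * (X x - \sum_y p y * X y)^+2 <= \sum_x p x * (X x - c)^+2.
Proof.
move=> hS. set m := \sum_y p y * X y.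
have e x : p x * (X x - c)^+2 = p x * (X x - m)^+2 + (2 * (m - c)) * (p x * X x) + ((m - c)^+2 - 2 * (m - c) * m) * p x by ring.
rewrite (eq_bigr _ (fun x _ => e x)) !big_split /= -!mulr_sumr hS -/m.
by rewrite mulr1 -addrA [2 * _ * _ + _]addrC subrK lerDl sqr_ge0.
Qed.

Lemma bnd n L : (1 <= L <= n)%N ->
  \sum_(i<n) (harmonic R L - harmonic R i)^+2 * (if (i < L)%N then L%:R^-1 else 0) <= 2.
Proof.
case/andP=> L1 Ln.
have -> : \sum_(i<n) (harmonic R L - harmonic R i)^+2 * (if (i < L)%N then L%:R^-1 else 0)
   = (\sum_(i<L) (harmonic R L - harmonic R i)^+2) * L%:R^-1.
  rewrite mulr_suml (big_ord_widen _ (fun i => (harmonic R L - harmonic R i)^+2 * L%:R^-1) Ln).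
  rewrite [RHS]big_mkcond /=; apply: eq_bigr => i _; case: ifP => _; by rewrite ?mulr0.
have hL : (L%:R : R) != 0 by rewrite pnatr_eq0 -lt0n.
have hL0 : (0 : R) < L%:R^-1 by rewrite invr_gt0 ltr0n.
apply: (@le_trans _ _ (2 * L%:R * L%:R^-1)); last by rewrite -mulrA mulfV ?mulr1.
by rewrite ler_pM2r // D2.
Qed.
End S.

Theorem lemma2 (R : realFieldType) (n l : nat) :
  (1 <= n)%N -> (1 <= l <= n)%N -> varX R n l <= 28.
Proof.
move=> hn hl. set l' := (n - l).+1.
have hl' : (1 <= l' <= n)%N by rewrite /l'; lia.
pose P := fun x : 'I_n * 'I_n => pmf R n l x.1 x.2.
pose Xf := fun x : 'I_n * 'I_n => Xval R x.1 x.2.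
have hS : \sum_x P x = 1.
  rewrite /P -(pair_bigA _ (fun i j : 'I_n => pmf R n l i j)) /=.
  under eq_bigr => i _ do rewrite margI //.
  case/andP: (hl) => l1 ln.
  rewrite -big_mkcond /= -(big_ord_widen _ (fun _ => l%:R^-1) ln) sumr_const card_ord.
  by rewrite -[_ *+ l]mulr_natl mulfV // pnatr_eq0 -lt0n.
have hm : meanX R n l = \sum_x P x * Xf x.
  by rewrite /meanX (pair_bigA _ (fun i j : 'I_n => pmf R n l i j * Xval R i j)).
have hv : varX R n l = \sum_x P x * (Xf x - meanX R n l)^+2.
  by rewrite /varX (pair_bigA _ (fun i j : 'I_n => pmf R n l i j * (Xval R i j - meanX R n l)^+2)).
rewrite hv hm. apply: (le_trans (@var_le R _ P Xf (harmonic R l + harmonic R l') hS)).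
rewrite /P /Xf -(pair_bigA _ (fun i j : 'I_n => pmf R n l i j * (Xval R i j - (harmonic R l + harmonic R l'))^+2)) /=.
pose a i := harmonic R l - harmonic R i.
pose b j := harmonic R l' - harmonic R j.
apply: (@le_trans _ _ (\sum_(i<n) \sum_(j<n) (2 * (pmf R n l i j * a i ^+2) + 2 * (pmf R n l i j * b j ^+2)))).
  apply: ler_sum => i _; apply: ler_sum => j _.
  have p0 := pmf_ge0 R n l i j.
  have h : 0 <= pmf R n l i j * (a i - b j)^+2 by rewrite mulr_ge0 ?sqr_ge0.
  have -> : Xval R i j - (harmonic R l + harmonic R l') = - (a i + b j) by rewrite /Xval /a /b; ring.
  rewrite sqrrN. nra.
under eq_bigr => i _ do rewrite big_split /=.
rewrite big_split /=.
have -> : \sum_(i<n) \sum_(j<n) 2 * (pmf R n l i j * a i ^+2) = 2 * \sum_(i<n) (a i ^+2 * \sum_(j<n) pmf R n l i j).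
  rewrite mulr_sumr; apply: eq_bigr => i _; rewrite !mulr_sumr; apply: eq_bigr => j _; ring.
have -> : \sum_(i<n) \sum_(j<n) 2 * (pmf R n l i j * b j ^+2) = 2 * \sum_(j<n) (b j ^+2 * \sum_(i<n) pmf R n l i j).
  rewrite exchange_big mulr_sumr; apply: eq_bigr => j _; rewrite !mulr_sumr; apply: eq_bigr => i _ /=; ring.
under eq_bigr => i _ do rewrite margI //.
under [X in _ + 2 * X]eq_bigr => j _ do rewrite margJ //.
have B1 := @bnd R n l hl. have B2 := @bnd R n l' hl'.
rewrite /a /b -/l'. lra.
Qed.
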